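(* If two circuits $c,d:a\to b$ are both safe and are equal modulo $E$, then they are equal modulo $A$.
   Context: A circuit is a morphism of the free symmetric strict monoidal category whose objects are natural numbers (tensor = addition) generated by $\mathsf{discard}:1\to 0$, $\mathsf{copy}:1\to 2$, $\mathsf{zero}:0\to1$, $\mathsf{add}:2\to1$, $\mathsf{one}:0\to 1$, $\mathsf{and}:2\to 1$, considered up to the laws of symmetric monoidal categories. Composition is diagrammatic ($f;g$ = first $f$ then $g$), $\sigma$ is the symmetry $2\to2$, $\mathsf{copy}_n$, $\mathsf{discard}_n$ are the evident composites. $A$ is the set of equations: $\mathsf{copy};\sigma=\mathsf{copy}$; $\mathsf{copy};(\mathsf{copy}\otimes \mathrm{id}_1)=\mathsf{copy};(\mathrm{id}_1\otimes\mathsf{copy})$; $\mathsf{copy};(\mathsf{discard}\otimes\mathrm{id}_1)=\mathrm{id}_1$; for every circuit $f:a\to b$, $f;\mathsf{copy}_b=\mathsf{copy}_a;(f\otimes f)$ and $f;\mathsf{discard}_b=\mathsf{discard}_a$; commutativity, associativity and unit laws for $(\mathsf{add},\mathsf{zero})$ and for $(\mathsf{and},\mathsf{one})$; $\mathsf{copy};\mathsf{add}=\mathsf{discard};\mathsf{zero}$; and distributivity $(\mathrm{id}_1\otimes\mathsf{add});\mathsf{and}=(\mathsf{copy}\otimes\mathrm{id}_2);(\mathrm{id}_1\otimes\sigma\otimes\mathrm{id}_1);(\mathsf{and}\otimes\mathsf{and});\mathsf{add}$. $E$ is $A$ together with the idempotence equation $\mathsf{copy};\mathsf{and}=\mathrm{id}_1$.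 ''Equal modulo $A$'' (resp. $E$) means related by the smallest congruence (w.r.t. composition and tensor) containing $A$ (resp. $E$). View a circuit as a directed graph whose nodes are wires and whose edges go from each input wire of a generator occurrence to each of its output wires. A circuit $c$ is safe if for every occurrence of $\mathsf{and}$ in $c$, there is no input port of $c$ from which both input ports of that $\mathsf{and}$ are reachable by a forward path. *)

(* Defs.v *)
From mathcomp Require Import all_boot.
From Stdlib Require Import Relations.Relation_Operators.

Set Implicit Arguments.
Unset Strict Implicit.
Unset Printing Implicit Defensive.

Inductive gen := Gdiscard | Gcopy | Gzero | Gadd | Gone | Gand.

Definition gdom (g : gen) : nat :=
  match g with Gdiscard => 1 | Gcopy => 1 | Gzero => 0 | Gadd => 2 | Gone => 0 | Gand => 2 end.
Definition gcod (g : gen) : nat :=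
  match g with Gdiscard => 0 | Gcopy => 2 | Gzero => 1 | Gadd => 1 | Gone => 1 | Gand => 1 end.

(** * Raw circuit terms (syntax of the free symmetric strict monoidal category).
    [TSym a b : a+b -> b+a] is the general symmetry; [TComp f g] is f;g. *)
Inductive term :=
| TGen (g : gen)
| TId (n : nat)
| TSym (a b : nat)
| TComp (f g : term)
| TTens (f g : term).

Fixpoint ty (t : term) : option (nat * nat) :=
  match t with
  | TGen g => Some (gdom g, gcod g)
  | TId n => Some (n, n)
  | TSym a b => Some (a + b, b + a)
  | TComp f g =>
      match ty f, ty g with
      | Some (a, b), Some (b', c) => if b == b' then Some (a, c) else None
      | _, _ => None
      end
  | TTens f g =>
      match ty f, ty g with
      | Some (a, b), Some (c, d) => Some (a + c, b + d)
      | _, _ => None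
      end
  end.

Definition discard := TGen Gdiscard.
Definition copy := TGen Gcopy.
Definition zero := TGen Gzero.
Definition add := TGen Gadd.
Definition one := TGen Gone.
Definition and_ := TGen Gand.
Definition sigma := TSym 1 1.

Fixpoint copy_n (n : nat) : term :=
  match n with
  | 0 => TId 0
  | n'.+1 => TComp (TTens copy (copy_n n'))
                   (TTens (TTens (TId 1) (TSym 1 n')) (TId n'))
  end.

Fixpoint discard_n (n : nat) : term :=
  match n with
  | 0 => TId 0
  | n'.+1 => TTens discard (discard_n n')
  end.

Inductive smc : term -> term -> Prop :=
| smc_compA f g h a b c d :
    ty f = Some (a, b) -> ty g = Some (b, c) -> ty h = Some (c, d) ->
    smc (TComp (TComp f g) h) (TComp f (TComp g h))
| smc_idl f a b : ty f = Some (a, b) -> smc (TComp (TId a) f) f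
| smc_idr f a b : ty f = Some (a, b) -> smc (TComp f (TId b)) f
| smc_tensA f g h a b c d e k :
    ty f = Some (a, b) -> ty g = Some (c, d) -> ty h = Some (e, k) ->
    smc (TTens (TTens f g) h) (TTens f (TTens g h))
| smc_unitl f a b : ty f = Some (a, b) -> smc (TTens (TId 0) f) f
| smc_unitr f a b : ty f = Some (a, b) -> smc (TTens f (TId 0)) f
| smc_idtens m n : smc (TTens (TId m) (TId n)) (TId (m + n))
| smc_interchange f g h k a b c a' b' c' :
    ty f = Some (a, b) -> ty g = Some (b, c) ->
    ty h = Some (a', b') -> ty k = Some (b', c') ->
    smc (TComp (TTens f h) (TTens g k)) (TTens (TComp f g) (TComp h k))
| smc_symsym a b : smc (TComp (TSym a b) (TSym b a)) (TId (a + b))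
| smc_hex1 a b c :
    smc (TSym a (b + c)) (TComp (TTens (TSym a b) (TId c)) (TTens (TId b) (TSym a c)))
| smc_hex2 a b c :
    smc (TSym (a + b) c) (TComp (TTens (TId a) (TSym b c)) (TTens (TSym a c) (TId b)))
| smc_symnat f g a b c d :
    ty f = Some (a, c) -> ty g = Some (b, d) ->
    smc (TComp (TTens f g) (TSym c d)) (TComp (TSym a b) (TTens g f)).

Inductive axA : term -> term -> Prop :=
| A_copy_comm : axA (TComp copy sigma) copy
| A_copy_assoc : axA (TComp copy (TTens copy (TId 1))) (TComp copy (TTens (TId 1) copy))
| A_copy_unit : axA (TComp copy (TTens discard (TId 1))) (TId 1)
| A_copy_nat f a b : ty f = Some (a, b) ->
    axA (TComp f (copy_n b)) (TComp (copy_n a) (TTens f f))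
| A_discard_nat f a b : ty f = Some (a, b) ->
    axA (TComp f (discard_n b)) (discard_n a)
| A_add_comm : axA (TComp sigma add) add
| A_add_assoc : axA (TComp (TTens add (TId 1)) add) (TComp (TTens (TId 1) add) add)
| A_add_unitl : axA (TComp (TTens zero (TId 1)) add) (TId 1)
| A_add_unitr : axA (TComp (TTens (TId 1) zero) add) (TId 1)
| A_and_comm : axA (TComp sigma and_) and_
| A_and_assoc : axA (TComp (TTens and_ (TId 1)) and_) (TComp (TTens (TId 1) and_) and_)
| A_and_unitl : axA (TComp (TTens one (TId 1)) and_) (TId 1)
| A_and_unitr : axA (TComp (TTens (TId 1) one) and_) (TId 1)
| A_copy_add : axA (TComp copy add) (TComp discard zero)
| A_distr : axA (TComp (TTens (TId 1) add) and_)
    (TComp (TTens copy (TId 2))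
      (TComp (TTens (TTens (TId 1) sigma) (TId 1))
        (TComp (TTens and_ and_) add))).

Inductive axE : term -> term -> Prop :=
| E_A s t : axA s t -> axE s t
| E_idem : axE (TComp copy and_) (TId 1).

Inductive cong (R : term -> term -> Prop) : term -> term -> Prop :=
| cong_ax s t : R s t -> cong R s t
| cong_refl t : cong R t t
| cong_sym s t : cong R s t -> cong R t s
| cong_trans s t u : cong R s t -> cong R t u -> cong R s u
| cong_comp f f' g g' : cong R f f' -> cong R g g' -> cong R (TComp f g) (TComp f' g')
| cong_tens f f' g g' : cong R f f' -> cong R g g' -> cong R (TTens f g) (TTens f' g').

(** Circuits are considered up to the SMC laws, so "equal modulo A/E" is the
    congruence generated by the SMC laws together with A (resp. E). *)
Definition eq_modA : term -> term -> Prop := cong (fun s t => smc s t \/ axA s t).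
Definition eq_modE : term -> term -> Prop := cong (fun s t => smc s t \/ axE s t).

(** Nodes are wires (natural numbers < nw); [gins]/[gouts] list the input and
    output port wires; [gedges] contains an edge from each input wire of a
    generator occurrence to each of its output wires; [gands] lists, for each
    occurrence of [and], the pair of its two input wires. *)
Record graph := Graph {
  nw : nat; gins : seq nat; gouts : seq nat;
  gedges : seq (nat * nat); gands : seq (nat * nat) }.

Definition shiftp (k : nat) (e : nat * nat) := (k + e.1, k + e.2).

Fixpoint wgraph (t : term) : graph :=
  match t with
  | TGen g =>
      Graph (gdom g + gcod g) (iota 0 (gdom g)) (iota (gdom g) (gcod g))
            [seq (i, o) | i <- iota 0 (gdom g), o <- iota (gdom g) (gcod g)]
            (if g is Gand then [:: (0, 1)] else [::])
  | TId n => Graph n (iota 0 n) (iota 0 n) [::] [::]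
  | TSym a b => Graph (a + b) (iota 0 (a + b)) (iota a b ++ iota 0 a) [::] [::]
  | TTens f g =>
      let G := wgraph f in let H := wgraph g in
      Graph (nw G + nw H)
            (gins G ++ map (addn (nw G)) (gins H))
            (gouts G ++ map (addn (nw G)) (gouts H))
            (gedges G ++ map (shiftp (nw G)) (gedges H))
            (gands G ++ map (shiftp (nw G)) (gands H))
  | TComp f g =>
      let G := wgraph f in let H := wgraph g in
      (* input wires of g are identified with the output wires of f *)
      let r w := if w \in gins H then nth 0 (gouts G) (index w (gins H))
                 else nw G + w in
      let rp (e : nat * nat) := (r e.1, r e.2) in
      Graph (nw G + nw H) (gins G) (map r (gouts H))
            (gedges G ++ map rp (gedges H))
            (gands G ++ map rp (gands H))
  end.

Definition reach (G : graph) : nat -> nat -> Prop :=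
  clos_refl_trans nat (fun x y => (x, y) \in gedges G).

Definition safe (t : term) : Prop :=
  let G := wgraph t in
  forall p q i, (p, q) \in gands G -> i \in gins G ->
    ~ (reach G i p /\ reach G i q).

(* Main.v *)
Require Import Defs.
From mathcomp Require Import all_boot zify.
From Stdlib Require Import Setoid Morphisms Relations.Relation_Operators Ring FunctionalExtensionality.
Set Implicit Arguments. Unset Strict Implicit. Unset Printing Implicit Defensive.

Notation "s =A t" := (eq_modA s t) (at level 70).
#[global] Instance eqA_equiv : Equivalence eq_modA.
Proof. split; [exact: cong_refl | exact: cong_sym | exact: cong_trans]. Qed.
#[global] Instance comp_proper : Proper (eq_modA ==> eq_modA ==> eq_modA) TComp.
Proof. move=> ? ? H ? ? H'; exact: cong_comp. Qed.
#[global] Instance tens_proper : Proper (eq_modA ==> eq_modA ==> eq_modA) TTens.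
Proof. move=> ? ? H ? ? H'; exact: cong_tens. Qed.

Notation T t a b := (ty t = Some (a, b)).
Lemma sA s t : smc s t -> s =A t. Proof. by move=> h; apply: cong_ax; left. Qed.
Lemma aA s t : axA s t -> s =A t. Proof. by move=> h; apply: cong_ax; right. Qed.

Lemma tyC f g a b c : T f a b -> T g b c -> T (TComp f g) a c.
Proof. by move=> /= -> ->; rewrite eqxx. Qed.
Lemma tyT f g a b c d : T f a b -> T g c d -> T (TTens f g) (a + c) (b + d).
Proof. by move=> /= -> ->. Qed.
Lemma tyW t a b a' b' : T t a b -> a = a' -> b = b' -> T t a' b'.
Proof. by move=> h <- <-. Qed.
Lemma tyD n : T (discard_n n) n 0.
Proof. by elim: n => //= n ->. Qed.
Lemma tyCn n : T (copy_n n) n (n + n).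
Proof. elim: n => //= n IH. rewrite IH; case: eqP => ?; [do 2 f_equal; lia | lia]. Qed.

Ltac tyc := repeat (progress (simpl; rewrite ?tyD ?tyCn;
  repeat match goal with H : ty ?f = Some _ |- context [ty ?f] => rewrite H end));
  repeat match goal with |- context [ ?x == ?y ] => have -> : (x == y) = true by apply/eqP; lia end;
  try reflexivity; try (do 2 f_equal; lia).

Lemma compA f g h a b c d : T f a b -> T g b c -> T h c d ->
  TComp (TComp f g) h =A TComp f (TComp g h).
Proof. move=> h1 h2 h3; apply: sA; exact: smc_compA h1 h2 h3. Qed.
Lemma idl f a b : T f a b -> TComp (TId a) f =A f.
Proof. move=> h1; apply: sA; exact: smc_idl h1. Qed.
Lemma idr f a b : T f a b -> TComp f (TId b) =A f.
Proof. move=> h1; apply: sA; exact: smc_idr h1. Qed.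
Lemma tensA f g h a b c d e k : T f a b -> T g c d -> T h e k ->
  TTens (TTens f g) h =A TTens f (TTens g h).
Proof. move=> h1 h2 h3; apply: sA; exact: smc_tensA h1 h2 h3. Qed.
Lemma unitl f a b : T f a b -> TTens (TId 0) f =A f.
Proof. move=> h1; apply: sA; exact: smc_unitl h1. Qed.
Lemma unitr f a b : T f a b -> TTens f (TId 0) =A f.
Proof. move=> h1; apply: sA; exact: smc_unitr h1. Qed.
Lemma idtens m n : TTens (TId m) (TId n) =A TId (m + n).
Proof. apply: sA; exact: smc_idtens. Qed.
Lemma inter f g h k a b c a' b' c' : T f a b -> T g b c -> T h a' b' -> T k b' c' ->
  TComp (TTens f h) (TTens g k) =A TTens (TComp f g) (TComp h k).
Proof. move=> h1 h2 h3 h4; apply: sA; exact: smc_interchange h1 h2 h3 h4. Qed.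
Lemma symnat f g a b c d : T f a c -> T g b d ->
  TComp (TTens f g) (TSym c d) =A TComp (TSym a b) (TTens g f).
Proof. move=> h1 h2; apply: sA; exact: smc_symnat h1 h2. Qed.

Lemma discE t n : T t n 0 -> t =A discard_n n.
Proof.
move=> h. rewrite -(idr h). change (TId 0) with (discard_n 0).
apply: aA; exact: A_discard_nat h.
Qed.

Lemma sym00 : TSym 0 0 =A TId 0.
Proof.
have h1 : TSym 0 0 =A TComp (TSym 0 0) (TSym 0 0).
  rewrite {1}(sA (smc_hex1 0 0 0)) /=.
  rewrite (unitr (f:=TSym 0 0) (a:=0) (b:=0)) // (unitl (f:=TSym 0 0) (a:=0) (b:=0)) //; reflexivity.
rewrite {1}h1. exact: (sA (smc_symsym 0 0)).
Qed.

Lemma idem_inv s u : T s 1 1 -> T u 1 1 -> s =A TComp s s -> TComp s u =A TId 1 -> s =A TId 1.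
Proof.
move=> ts tu h1 h2. symmetry. rewrite -{1}h2 {1}h1 (compA ts ts tu) h2 (idr ts). reflexivity.
Qed.

Lemma sym01 : TSym 0 1 =A TId 1.
Proof.
apply: (@idem_inv _ (TSym 1 0)) => //.
  rewrite {1}(sA (smc_hex2 0 0 1)) /=.
  rewrite (unitr (f:=TSym 0 1) (a:=1) (b:=1)) // (unitl (f:=TSym 0 1) (a:=1) (b:=1)) //; reflexivity.
exact: (sA (smc_symsym 0 1)).
Qed.

Lemma sym10 : TSym 1 0 =A TId 1.
Proof.
apply: (@idem_inv _ (TSym 0 1)) => //.
  rewrite {1}(sA (smc_hex1 1 0 0)) /=.
  rewrite (unitr (f:=TSym 1 0) (a:=1) (b:=1)) // (unitl (f:=TSym 1 0) (a:=1) (b:=1)) //; reflexivity.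
exact: (sA (smc_symsym 1 0)).
Qed.

Lemma sym0 m : TSym 0 m =A TId m.
Proof.
elim: m => [|m IH]; first exact: sym00.
rewrite (sA (smc_hex1 0 1 m)) sym01 IH !idtens (idl (a:=1+m) (b:=1+m)) //; reflexivity.
Qed.

Lemma copyR : TComp copy (TTens (TId 1) discard) =A TId 1.
Proof.
rewrite -{1}(aA A_copy_comm) (compA (a:=1) (b:=2) (c:=2) (d:=1)) //.
rewrite -(symnat (f:=discard) (g:=TId 1) (a:=1) (b:=1) (c:=0) (d:=1)) //.
rewrite sym01 (idr (a:=2) (b:=1)) //. exact: (aA A_copy_unit).
Qed.

Ltac sc := try (match goal with |- ty _ = _ => solve [tyc] end).

Lemma CU_L n : TComp (copy_n n) (TTens (discard_n n) (TId n)) =A TId n.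
Proof.
elim: n => [|n IH] /=.
  rewrite idtens (idl (a:=0) (b:=0)); sc; reflexivity.
have eX : TTens (TTens discard (discard_n n)) (TId n.+1) =A
          TTens (TTens discard (TTens (discard_n n) (TId 1))) (TId n).
  change (TId n.+1) with (TId (1 + n)). rewrite -(idtens 1 n).
  rewrite -(tensA (a:=1+n) (b:=0) (c:=1) (d:=1) (e:=n) (k:=n)); sc.
  rewrite (tensA (f:=discard) (a:=1) (b:=0) (c:=n) (d:=0) (e:=1) (k:=1)); sc. reflexivity.
rewrite eX.
rewrite (compA (a:=1+n) (b:=2+(n+n)) (c:=1+(n+1)+n) (d:=1+n)); sc.
rewrite (inter (a:=1+(1+n)) (b:=1+(n+1)) (c:=1) (a':=n) (b':=n) (c':=n)); sc.
rewrite (inter (f:=TId 1) (a:=1) (b:=1) (c:=0) (a':=1+n) (b':=n+1) (c':=1)); sc.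
rewrite -(symnat (f:=TId 1) (g:=discard_n n) (a:=1) (b:=n) (c:=1) (d:=0)); sc.
rewrite sym10 (idr (a:=1+n) (b:=1)); sc.
rewrite (idl (a:=1) (b:=0)); sc. rewrite (idl (a:=n) (b:=n)); sc.
rewrite -(tensA (a:=1) (b:=0) (c:=1) (d:=1) (e:=n) (k:=0)); sc.
rewrite (tensA (a:=2) (b:=1) (c:=n) (d:=0) (e:=n) (k:=n)); sc.
rewrite (inter (a:=1) (b:=2) (c:=1) (a':=n) (b':=n+n) (c':=n)); sc.
rewrite (aA A_copy_unit) IH idtens. reflexivity.
Qed.

Lemma CU_R n : TComp (copy_n n) (TTens (TId n) (discard_n n)) =A TId n.
Proof.
elim: n => [|n IH] /=.
  rewrite idtens (idl (a:=0) (b:=0)); sc; reflexivity.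
have eX : TTens (TId n.+1) (TTens discard (discard_n n)) =A
          TTens (TTens (TId 1) (TTens (TId n) discard)) (discard_n n).
  change (TId n.+1) with (TId (1 + n)). rewrite -(idtens 1 n).
  rewrite (tensA (f:=TId 1) (a:=1) (b:=1) (c:=n) (d:=n) (e:=1+n) (k:=0)); sc.
  rewrite (tensA (f:=TId 1) (a:=1) (b:=1) (c:=n+1) (d:=n) (e:=n) (k:=0)); sc.
  rewrite (tensA (f:=TId n) (a:=n) (b:=n) (c:=1) (d:=0) (e:=n) (k:=0)); sc. reflexivity.
rewrite eX.
rewrite (compA (a:=1+n) (b:=2+(n+n)) (c:=1+(n+1)+n) (d:=1+n)); sc.
rewrite (inter (a:=1+(1+n)) (b:=1+(n+1)) (c:=1+n) (a':=n) (b':=n) (c':=0)); sc.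
rewrite (inter (f:=TId 1) (a:=1) (b:=1) (c:=1) (a':=1+n) (b':=n+1) (c':=n)); sc.
rewrite -(symnat (f:=discard) (g:=TId n) (a:=1) (b:=n) (c:=0) (d:=n)); sc.
rewrite sym0 (idr (a:=1+n) (b:=n)); sc.
rewrite (idl (a:=1) (b:=1)); sc. rewrite (idl (a:=n) (b:=0)); sc.
rewrite -(tensA (f:=TId 1) (a:=1) (b:=1) (c:=1) (d:=0) (e:=n) (k:=n)); sc.
rewrite (tensA (f:=TTens (TId 1) discard) (a:=2) (b:=1) (c:=n) (d:=n) (e:=n) (k:=0)); sc.
rewrite (inter (a:=1) (b:=2) (c:=1) (a':=n) (b':=n+n) (c':=n)); sc.
rewrite copyR IH idtens. reflexivity.
Qed.

Lemma CP_L f n k : T f n k -> TComp (copy_n n) (TTens (discard_n n) f) =A f.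
Proof.
move=> tf.
have e : TTens (discard_n n) f =A TComp (TTens (discard_n n) (TId n)) (TTens (TId 0) f).
  rewrite (inter (a:=n) (b:=0) (c:=0) (a':=n) (b':=n) (c':=k)); sc.
  rewrite (idr (tyD n)) (idl tf). reflexivity.
rewrite e -(compA (a:=n) (b:=n+n) (c:=0+n) (d:=0+k)); sc.
rewrite CU_L (idl (a:=n) (b:=0+k)); sc. rewrite (unitl tf). reflexivity.
Qed.

Lemma CP_R f n k : T f n k -> TComp (copy_n n) (TTens f (discard_n n)) =A f.
Proof.
move=> tf.
have e : TTens f (discard_n n) =A TComp (TTens (TId n) (discard_n n)) (TTens f (TId 0)).
  rewrite (inter (a:=n) (b:=n) (c:=k) (a':=n) (b':=0) (c':=0)); sc.
  rewrite (idr (tyD n)) (idl tf). reflexivity.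
rewrite e -(compA (a:=n) (b:=n+n) (c:=n+0) (d:=k+0)); sc.
rewrite CU_R (idl (a:=n) (b:=k+0)); sc. rewrite (unitr tf). reflexivity.
Qed.

Lemma PAIR m : TComp (copy_n m.+1) (TTens (TTens (TId 1) (discard_n m)) (TTens discard (TId m))) =A TId m.+1.
Proof.
rewrite /=.
have eX : TTens (TTens (TId 1) (discard_n m)) (TTens discard (TId m)) =A
          TTens (TTens (TId 1) (TTens (discard_n m) discard)) (TId m).
  rewrite (tensA (f:=TId 1) (a:=1) (b:=1) (c:=m) (d:=0) (e:=1+m) (k:=m)); sc.
  rewrite (tensA (f:=TId 1) (a:=1) (b:=1) (c:=m+1) (d:=0) (e:=m) (k:=m)); sc.
  rewrite (tensA (f:=discard_n m) (a:=m) (b:=0) (c:=1) (d:=0) (e:=m) (k:=m)); sc. reflexivity.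
rewrite eX.
rewrite (compA (a:=1+m) (b:=2+(m+m)) (c:=1+(m+1)+m) (d:=1+m)); sc.
rewrite (inter (a:=1+(1+m)) (b:=1+(m+1)) (c:=1) (a':=m) (b':=m) (c':=m)); sc.
rewrite (inter (f:=TId 1) (a:=1) (b:=1) (c:=1) (a':=1+m) (b':=m+1) (c':=0)); sc.
rewrite (@discE (TComp (TSym 1 m) (TTens (discard_n m) discard)) (1+m)); sc.
rewrite /= (idl (a:=1) (b:=1)); sc. rewrite (idl (a:=m) (b:=m)); sc.
rewrite -(tensA (f:=TId 1) (a:=1) (b:=1) (c:=1) (d:=0) (e:=m) (k:=0)); sc.
rewrite (tensA (f:=TTens (TId 1) discard) (a:=2) (b:=1) (c:=m) (d:=0) (e:=m) (k:=m)); sc.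
rewrite (inter (a:=1) (b:=2) (c:=1) (a':=m) (b':=m+m) (c':=m)); sc.
rewrite copyR CU_L idtens. reflexivity.
Qed.

Definition pi m j := TTens (TTens (discard_n j) (TId 1)) (discard_n (m - j.+1)).
Lemma tyPi m j : j < m -> T (pi m j) m 1.
Proof. move=> h; rewrite /= !tyD; do 2 f_equal; lia. Qed.

Lemma copyN f a b : T f a b -> TComp f (copy_n b) =A TComp (copy_n a) (TTens f f).
Proof. move=> h; apply: aA; exact: A_copy_nat. Qed.

Lemma pi_succ m j : j < m -> TComp (TTens discard (TId m)) (pi m j) =A pi m.+1 j.+1.
Proof.
move=> hj.
rewrite -(unitl (tyPi hj)).
rewrite (inter (a:=1) (b:=0) (c:=0) (a':=m) (b':=m) (c':=1)); sc.
rewrite (idr (a:=1) (b:=0)); sc. rewrite (idl (tyPi hj)).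
rewrite /pi subSS /=.
rewrite -(tensA (f:=discard) (a:=1) (b:=0) (c:=j+1) (d:=1) (e:=m-j.+1) (k:=0)); sc.
rewrite -(tensA (f:=discard) (a:=1) (b:=0) (c:=j) (d:=0) (e:=1) (k:=1)); sc.
exact: cong_refl.
Qed.

Lemma split_pair c n m : T c n m.+1 ->
  c =A TComp (copy_n n) (TTens (TComp c (TTens (TId 1) (discard_n m))) (TComp c (TTens discard (TId m)))).
Proof.
move=> tc.
rewrite -{1}(idr tc) -PAIR.
rewrite -(compA (a:=n) (b:=m.+1) (c:=m.+1+m.+1) (d:=1+m)); sc.
rewrite (copyN tc).
rewrite (compA (a:=n) (b:=n+n) (c:=m.+1+m.+1) (d:=1+m)); sc.
rewrite (inter (a:=n) (b:=m.+1) (c:=1) (a':=n) (b':=m.+1) (c':=m)); sc.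
reflexivity.
Qed.

Lemma JM m : forall n c d, T c n m -> T d n m ->
  (forall j, j < m -> TComp c (pi m j) =A TComp d (pi m j)) -> c =A d.
Proof.
elim: m => [|m IH] n c d tc td h.
  rewrite (discE tc) (discE td); reflexivity.
rewrite (split_pair tc) (split_pair td).
have eP : pi m.+1 0 =A TTens (TId 1) (discard_n m).
  rewrite /pi subSS subn0 /= idtens. reflexivity.
have h0 := h 0 (ltn0Sn m). rewrite eP in h0. rewrite h0.
suff -> : TComp c (TTens discard (TId m)) =A TComp d (TTens discard (TId m)) by reflexivity.
apply: (IH n); sc.
move=> j hj.
rewrite (compA (a:=n) (b:=m.+1) (c:=m) (d:=1)); sc.
rewrite (compA (a:=n) (b:=m.+1) (c:=m) (d:=1)); sc.
rewrite (pi_succ hj). apply: h. by [].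
Qed.

Inductive expr := Var of nat | Zero | One | Add of expr & expr | Mul of expr & expr.

Fixpoint substf (s : nat -> expr) e := match e with
 | Var i => s i | Zero => Zero | One => One
 | Add x y => Add (substf s x) (substf s y) | Mul x y => Mul (substf s x) (substf s y) end.
Definition subst (sg : seq expr) := substf (nth Zero sg).
Definition shift k := substf (fun i => Var (k + i)).
Fixpoint occ i e : bool := match e with
 | Var j => i == j | Zero => false | One => false
 | Add x y => occ i x || occ i y | Mul x y => occ i x || occ i y end.

Fixpoint idom t := match t with
 | TGen g => gdom g | TId n => n | TSym a b => a + b
 | TComp f g => idom f | TTens f g => idom f + idom g end.
Definition vl l := map Var l.
Definition geval g := match g with
 | Gdiscard => [::] | Gcopy => [:: Var 0; Var 0] | Gzero => [:: Zero]
 | Gadd => [:: Add (Var 0) (Var 1)] | Gone => [:: One] | Gand => [:: Mul (Var 0) (Var 1)] end.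
Fixpoint eval t := match t with
 | TGen g => geval g
 | TId n => vl (iota 0 n)
 | TSym a b => vl (iota a b ++ iota 0 a)
 | TComp f g => map (subst (eval f)) (eval g)
 | TTens f g => eval f ++ map (shift (idom f)) (eval g) end.

Lemma substf_ext s s' e : (forall i, occ i e -> s i = s' i) -> substf s e = substf s' e.
Proof.
elim: e => //= [i|x IHx y IHy|x IHx y IHy] h; first by apply: h; rewrite eqxx.
all: by rewrite IHx ?IHy // => i hi; apply: h; rewrite hi ?orbT.
Qed.
Lemma substf_id e : substf Var e = e.
Proof. by elim: e => //= x -> y ->. Qed.
Lemma substf_comp s t e : substf s (substf t e) = substf (fun i => substf s (t i)) e.
Proof. by elim: e => //= x -> y ->. Qed.
Lemma occ_substf i s e : occ i (substf s e) -> exists k, occ k e /\ occ i (s k).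
Proof.
elim: e => //= [k|x IHx y IHy|x IHx y IHy] h; first by exists k; rewrite eqxx.
all: case/orP: h => [/IHx|/IHy] [k [h1 h2]]; exists k; by rewrite h1 ?orbT.
Qed.
Lemma occ_shift i k e : occ i (shift k e) -> exists i', i = k + i' /\ occ i' e.
Proof. move/occ_substf=> [i' [h1 /= /eqP ->]]; by exists i'. Qed.

Lemma tyEval t a b : T t a b -> idom t = a /\ size (eval t) = b.
Proof.
elim: t a b => [g|n|x y|f IHf g IHg|f IHf g IHg] a b /=.
- by case: g => -[<- <-].
- by case=> <- <-; rewrite size_map size_iota.
- by case=> <- <-; rewrite size_map size_cat !size_iota addnC.
- case ef: (ty f) => [[a1 b1]|] //; case eg: (ty g) => [[b2 c2]|] //.
  case: eqP => // _ [<- <-]. have [-> _] := IHf _ _ ef. have [_ <-] := IHg _ _ eg.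
  by rewrite size_map.
- case ef: (ty f) => [[a1 b1]|] //; case eg: (ty g) => [[b2 c2]|] // [<- <-].
  have [-> <-] := IHf _ _ ef. have [-> <-] := IHg _ _ eg.
  by rewrite size_cat size_map.
Qed.

Lemma nth_map_sub (h : expr -> expr) s j : h Zero = Zero ->
  nth Zero (map h s) j = h (nth Zero s j).
Proof.
move=> h0; case: (ltnP j (size s)) => hj; first by rewrite (nth_map Zero).
by rewrite !nth_default ?size_map.
Qed.

Lemma scoped_eval t j i : occ i (nth Zero (eval t) j) -> i < idom t.
Proof.
elim: t j i => [g|n|x y|f IHf g IHg|f IHf g IHg] j i /=.
- case: g; case: j => [|[|j]] /=; rewrite ?nth_nil //; move=> h; lia.
- case: (ltnP j n) => hj; last by rewrite nth_default // size_map size_iota.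
  by rewrite /vl (nth_map 0) ?size_iota // nth_iota //= => /eqP ->.
- case: (ltnP j (x + y)) => hj; last by rewrite nth_default // size_map size_cat !size_iota addnC.
  rewrite /vl (nth_map 0) ?size_cat ?size_iota 1?addnC // => /= /eqP ->.
  rewrite nth_cat size_iota; case: ifP => h; rewrite nth_iota //; lia.
- rewrite nth_map_sub // => /occ_substf [k [hk]].
  case: (ltnP k (size (eval f))) => hs; first by move/IHf.
  by rewrite nth_default.
- rewrite nth_cat; case: ifP => _; first by move/IHf; lia.
  rewrite nth_map_sub // => /occ_shift [i' [-> /IHg]]. lia.
Qed.

Fixpoint C n e := match e with
 | Var i => if i < n then pi n i else TComp (discard_n n) Defs.zero
 | Zero => TComp (discard_n n) Defs.zero
 | One => TComp (discard_n n) Defs.one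
 | Add x y => TComp (TComp (copy_n n) (TTens (C n x) (C n y))) Defs.add
 | Mul x y => TComp (TComp (copy_n n) (TTens (C n x) (C n y))) and_ end.

Lemma tyCe n e : T (C n e) n 1.
Proof.
elim: e => [i|||x IHx y IHy|x IHx y IHy] /=.
- case: ifP => h; [exact: tyPi | by rewrite /= ?tyD].
- by rewrite /= ?tyD.
- by rewrite /= ?tyD.
- by rewrite /= ?tyCn ?IHx ?IHy ?eqxx.
- by rewrite /= ?tyCn ?IHx ?IHy ?eqxx.
Qed.

Ltac tyc2 := repeat (progress (simpl; rewrite ?tyD ?tyCn ?tyCe;
  repeat match goal with H : ty ?f = Some _ |- context [ty ?f] => rewrite H end));
  repeat match goal with |- context [ ?x == ?y ] => have -> : (x == y) = true by apply/eqP; lia end;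
  try reflexivity; try (do 2 f_equal; lia).
Ltac sc2 := try (match goal with |- ty _ = _ => solve [tyc2 | apply: tyPi; lia] end).

Lemma distr_comp f n m X Y G p q r : T f n m -> T X m p -> T Y m q -> T G (p + q) r ->
  TComp f (TComp (TComp (copy_n m) (TTens X Y)) G) =A
  TComp (TComp (copy_n n) (TTens (TComp f X) (TComp f Y))) G.
Proof.
move=> tf tX tY tG.
rewrite -(compA (f:=f) (g:=TComp (copy_n m) (TTens X Y)) (h:=G) (a:=n) (b:=m) (c:=p+q) (d:=r)); sc2.
rewrite -(compA (f:=f) (g:=copy_n m) (h:=TTens X Y) (a:=n) (b:=m) (c:=m+m) (d:=p+q)); sc2.
rewrite (copyN tf).
rewrite (compA (f:=copy_n n) (g:=TTens f f) (h:=TTens X Y) (a:=n) (b:=n+n) (c:=m+m) (d:=p+q)); sc2.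
rewrite (inter (a:=n) (b:=m) (c:=p) (a':=n) (b':=m) (c':=q)); sc2.
reflexivity.
Qed.

Lemma SUBST f n m : T f n m -> size (eval f) = m ->
  (forall k, k < m -> TComp f (pi m k) =A C n (nth Zero (eval f) k)) ->
  forall e, TComp f (C m e) =A C n (subst (eval f) e).
Proof.
move=> tf sf h.
have h0 : forall z, T z 0 1 -> TComp f (TComp (discard_n m) z) =A TComp (discard_n n) z.
  move=> z tz. rewrite -(compA (a:=n) (b:=m) (c:=0) (d:=1)); sc2.
  rewrite (@discE (TComp f (discard_n m)) n); sc2. reflexivity.
elim=> [k|||x IHx y IHy|x IHx y IHy] /=.
- case: ifP => hk; first exact: h.
  rewrite /subst /= nth_default; last by rewrite sf leqNgt hk.
  by apply: h0.
- by apply: h0.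
- by apply: h0.
- rewrite (distr_comp (p:=1) (q:=1) (r:=1) tf); sc2. rewrite IHx IHy; reflexivity.
- rewrite (distr_comp (p:=1) (q:=1) (r:=1) tf); sc2. rewrite IHx IHy; reflexivity.
Qed.

Lemma eval_disc n : eval (discard_n n) = [::].
Proof. by elim: n => //= n ->. Qed.

Lemma nth_vl_iota s n k : k < n -> nth Zero (vl (iota s n)) k = Var (s + k).
Proof. by move=> h; rewrite /vl (nth_map 0) ?size_iota // nth_iota. Qed.

Lemma piSplitL m1 m2 j : j < m1 -> pi (m1 + m2) j =A TTens (pi m1 j) (discard_n m2).
Proof.
move=> hj. rewrite /pi.
rewrite (tensA (f:=TTens (discard_n j) (TId 1)) (a:=j+1) (b:=1) (c:=m1 - j.+1) (d:=0) (e:=m2) (k:=0)); sc2.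
rewrite (@discE (TTens (discard_n (m1 - j.+1)) (discard_n m2)) (m1 - j.+1 + m2)); sc2.
have -> : m1 - j.+1 + m2 = m1 + m2 - j.+1 by lia.
reflexivity.
Qed.

Lemma piSplitR m1 m2 j : j < m2 -> pi (m1 + m2) (m1 + j) =A TTens (discard_n m1) (pi m2 j).
Proof.
move=> hj. rewrite /pi.
rewrite -(tensA (f:=discard_n m1) (g:=TTens (discard_n j) (TId 1)) (a:=m1) (b:=0) (c:=j+1) (d:=1) (e:=m2 - j.+1) (k:=0)); sc2.
rewrite -(tensA (f:=discard_n m1) (g:=discard_n j) (h:=TId 1) (a:=m1) (b:=0) (c:=j) (d:=0) (e:=1) (k:=1)); sc2.
rewrite (@discE (TTens (discard_n m1) (discard_n j)) (m1 + j)); sc2.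
have -> : m2 - j.+1 = m1 + m2 - (m1 + j).+1 by lia.
reflexivity.
Qed.

Lemma WEAK a1 a2 e : (forall i, occ i e -> i < a1) ->
  TTens (C a1 e) (discard_n a2) =A C (a1 + a2) e.
Proof.
move=> sc.
set h := TTens (TId a1) (discard_n a2).
have th : T h (a1 + a2) a1 by rewrite /= tyD addn0.
have eh : eval h = vl (iota 0 a1) by rewrite /= eval_disc cats0.
have -> : TTens (C a1 e) (discard_n a2) =A TComp h (C a1 e).
  rewrite -{2}(unitr (tyCe a1 e)).
  rewrite (inter (a:=a1) (b:=a1) (c:=1) (a':=a2) (b':=0) (c':=0)); sc2.
  rewrite (idl (tyCe a1 e)) (idr (tyD a2)). reflexivity.
rewrite (SUBST th).
- rewrite eh /subst (@substf_ext _ Var); first by rewrite substf_id; reflexivity.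
  by move=> i /sc hi; rewrite nth_vl_iota.
- by rewrite eh size_map size_iota.
- move=> k hk. rewrite eh nth_vl_iota //= ifT; last lia.
  rewrite -(unitr (tyPi hk)).
  rewrite (inter (a:=a1) (b:=a1) (c:=1) (a':=a2) (b':=0) (c':=0)); sc2.
  rewrite (idl (tyPi hk)) (idr (tyD a2)) -piSplitL //. reflexivity.
Qed.

Lemma idom_disc n : idom (discard_n n) = n.
Proof. by elim: n => //= n ->. Qed.

Lemma WEAK2 a1 a2 e : (forall i, occ i e -> i < a2) ->
  TTens (discard_n a1) (C a2 e) =A C (a1 + a2) (shift a1 e).
Proof.
move=> sc.
set h := TTens (discard_n a1) (TId a2).
have th : T h (a1 + a2) a2 by rewrite /= tyD.
have eh : eval h = map (shift a1) (vl (iota 0 a2)) by rewrite /= eval_disc idom_disc.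
have nh : forall k, k < a2 -> nth Zero (eval h) k = Var (a1 + k).
  by move=> k hk; rewrite eh (nth_map Zero) ?size_map ?size_iota // nth_vl_iota.
have -> : TTens (discard_n a1) (C a2 e) =A TComp h (C a2 e).
  rewrite -{2}(unitl (tyCe a2 e)).
  rewrite (inter (a:=a1) (b:=0) (c:=0) (a':=a2) (b':=a2) (c':=1)); sc2.
  rewrite (idl (tyCe a2 e)) (idr (tyD a1)). reflexivity.
rewrite (SUBST th).
- rewrite /subst /shift (@substf_ext _ (fun i => Var (a1 + i))); first reflexivity.
  by move=> i /sc hi; rewrite nh.
- by rewrite eh !size_map size_iota.
- move=> k hk. rewrite nh //= ifT; last lia.
  rewrite -(unitl (tyPi hk)).
  rewrite (inter (a:=a1) (b:=0) (c:=0) (a':=a2) (b':=a2) (c':=1)); sc2.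
  rewrite (idl (tyPi hk)) (idr (tyD a1)) -piSplitR //. reflexivity.
Qed.

Lemma pi10 : pi 1 0 =A TId 1.
Proof.
change (pi 1 0) with (TTens (TTens (TId 0) (TId 1)) (TId 0)).
rewrite !idtens. reflexivity.
Qed.

Lemma ID2 : TComp (copy_n 2) (TTens (pi 2 0) (pi 2 1)) =A TId 2.
Proof.
have t0 : T (pi 2 0) 2 1 by apply: tyPi.
have t1 : T (pi 2 1) 2 1 by apply: tyPi.
apply: (@JM 2 2); sc2.
case=> [|[|j]] // _.
- have e0 : pi 2 0 =A TTens (pi 1 0) (discard_n 1) := @piSplitL 1 1 0 isT.
  rewrite {2}e0 (compA (a:=2) (b:=2+2) (c:=1+1) (d:=1+0)); sc2.
  rewrite (inter (a:=2) (b:=1) (c:=1) (a':=2) (b':=1) (c':=0)); sc2.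
  rewrite pi10 (idr t0) (@discE (TComp (pi 2 1) (discard_n 1)) 2); sc2.
  rewrite (CP_R t0) (idl t0). reflexivity.
- have e1 : pi 2 1 =A TTens (discard_n 1) (pi 1 0) := @piSplitR 1 1 0 isT.
  rewrite {2}e1 (compA (a:=2) (b:=2+2) (c:=1+1) (d:=0+1)); sc2.
  rewrite (inter (a:=2) (b:=1) (c:=0) (a':=2) (b':=1) (c':=1)); sc2.
  rewrite pi10 (idr t1) (@discE (TComp (pi 2 0) (discard_n 1)) 2); sc2.
  rewrite (CP_L t1) (idl t1). reflexivity.
Qed.

Lemma MAIN t : forall a b, T t a b -> forall j, j < b ->
  TComp t (pi b j) =A C a (nth Zero (eval t) j).
Proof.
elim: t => [g|n|x y|f IHf g IHg|f IHf g IHg] a b /=.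
- case: g => -[<- <-] j hj /=.
  + by [].
  + case: j hj => [|[|j]] // _.
    * change (pi 2 0) with (TTens (TTens (TId 0) (TId 1)) (TTens discard (TId 0))).
      rewrite idtens (unitr (a:=1) (b:=0)) //= copyR pi10. reflexivity.
    * change (pi 2 1) with (TTens (TTens (TTens discard (TId 0)) (TId 1)) (TId 0)).
      rewrite (unitr (f:=TTens (TTens discard (TId 0)) (TId 1)) (a:=1+1) (b:=0+1)) //.
      rewrite (unitr (f:=discard) (a:=1) (b:=0)) //= (aA A_copy_unit) pi10. reflexivity.
  + case: j hj => // _ /=. rewrite pi10 (idr (a:=0) (b:=1)) // (idl (a:=0) (b:=1)) //. reflexivity.
  + case: j hj => // _ /=. rewrite pi10 (idr (a:=2) (b:=1)) // ID2 (idl (a:=2) (b:=1)) //. reflexivity.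
  + case: j hj => // _ /=. rewrite pi10 (idr (a:=0) (b:=1)) // (idl (a:=0) (b:=1)) //. reflexivity.
  + case: j hj => // _ /=. rewrite pi10 (idr (a:=2) (b:=1)) // ID2 (idl (a:=2) (b:=1)) //. reflexivity.
- case=> <- <- j hj. rewrite (idl (tyPi hj)) nth_vl_iota //= ifT //. reflexivity.
- case=> <- <- j hj.
  case: (ltnP j y) => hy.
  + rewrite (@piSplitL y x j hy).
    rewrite -(symnat (f:=discard_n x) (g:=pi y j) (a:=x) (b:=y) (c:=0) (d:=1)); sc2.
    rewrite sym01 (idr (a:=x+y) (b:=1)); sc2.
    rewrite -piSplitR // /vl (nth_map 0); last by rewrite size_cat !size_iota; lia.
    rewrite nth_cat size_iota hy nth_iota //= ifT; last lia. reflexivity.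
  + have -> : j = y + (j - y) by lia.
    have hj' : j - y < x by lia.
    rewrite (@piSplitR y x (j - y) hj').
    rewrite -(symnat (f:=pi x (j - y)) (g:=discard_n y) (a:=x) (b:=y) (c:=1) (d:=0)); sc2.
    rewrite sym10 (idr (a:=x+y) (b:=1)); sc2.
    rewrite -piSplitL // /vl (nth_map 0); last by rewrite size_cat !size_iota; lia.
    rewrite nth_cat size_iota ifF; last lia.
    rewrite nth_iota; last lia. rewrite /= ifT; last lia.
    have -> : y + (j - y) - y = j - y by lia. reflexivity.
- case ef: (ty f) => [[a1 b1]|] //; case eg: (ty g) => [[b2 c2]|] //.
  case: eqP => // eb; subst b2 => -[<- <-] j hj.
  have [df sf] := tyEval ef. have [dg sg] := tyEval eg.
  rewrite (compA (a:=a1) (b:=b1) (c:=c2) (d:=1)); sc2.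
  rewrite (IHg _ _ eg j hj) (SUBST ef sf (IHf _ _ ef)) nth_map_sub //. reflexivity.
- case ef: (ty f) => [[a1 b1]|] //; case eg: (ty g) => [[a2 b2]|] // [<- <-] j hj.
  have [df sf] := tyEval ef. have [dg sg] := tyEval eg.
  case: (ltnP j b1) => hb.
  + rewrite (@piSplitL b1 b2 j hb).
    rewrite (inter (a:=a1) (b:=b1) (c:=1) (a':=a2) (b':=b2) (c':=0)); sc2.
    rewrite (IHf _ _ ef j hb) (@discE (TComp g (discard_n b2)) a2); sc2.
    rewrite WEAK; last by move=> i; rewrite -df; apply: scoped_eval.
    rewrite nth_cat sf hb. reflexivity.
  + have -> : j = b1 + (j - b1) by lia.
    have hj' : j - b1 < b2 by lia.
    rewrite (@piSplitR b1 b2 (j - b1) hj').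
    rewrite (inter (a:=a1) (b:=b1) (c:=0) (a':=a2) (b':=b2) (c':=1)); sc2.
    rewrite (IHg _ _ eg _ hj') (@discE (TComp f (discard_n b1)) a1); sc2.
    rewrite WEAK2; last by move=> i; rewrite -dg; apply: scoped_eval.
    rewrite nth_cat sf ifF; last lia.
    rewrite nth_map_sub // df. have -> : b1 + (j - b1) - b1 = j - b1 by lia. reflexivity.
Qed.

Inductive req : expr -> expr -> Prop :=
| rq_refl e : req e e
| rq_sym e f : req e f -> req f e
| rq_trans e f g : req e f -> req f g -> req e g
| rq_add x x' y y' : req x x' -> req y y' -> req (Add x y) (Add x' y')
| rq_mul x x' y y' : req x x' -> req y y' -> req (Mul x y) (Mul x' y')
| rq_addC x y : req (Add x y) (Add y x)
| rq_addA x y z : req (Add (Add x y) z) (Add x (Add y z))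
| rq_add0 x : req (Add Zero x) x
| rq_addxx x : req (Add x x) Zero
| rq_mulC x y : req (Mul x y) (Mul y x)
| rq_mulA x y z : req (Mul (Mul x y) z) (Mul x (Mul y z))
| rq_mul1 x : req (Mul One x) x
| rq_distr x y z : req (Mul x (Add y z)) (Add (Mul x y) (Mul x z)).

#[global] Instance req_equiv : Equivalence req.
Proof. split; [exact: rq_refl | exact: rq_sym | exact: rq_trans]. Qed.
#[global] Instance add_proper : Proper (req ==> req ==> req) Add.
Proof. move=> ? ? H ? ? H'; exact: rq_add. Qed.
#[global] Instance mul_proper : Proper (req ==> req ==> req) Mul.
Proof. move=> ? ? H ? ? H'; exact: rq_mul. Qed.

Definition eopp (x : expr) := x.
Lemma expr_rt : ring_theory Zero One Add Mul Add eopp req.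
Proof.
split.
- exact: rq_add0.
- exact: rq_addC.
- move=> x y z; symmetry; exact: rq_addA.
- exact: rq_mul1.
- exact: rq_mulC.
- move=> x y z; symmetry; exact: rq_mulA.
- move=> x y z. rewrite rq_mulC rq_distr. rewrite (rq_mulC z x) (rq_mulC z y). reflexivity.
- reflexivity.
- exact: rq_addxx.
Qed.
Lemma expr_ext : ring_eq_ext Add Mul eopp req.
Proof. split; [exact: add_proper | exact: mul_proper | by move=> ? ? ]. Qed.
Add Ring exprR : expr_rt (setoid req_equiv expr_ext).



Lemma shift_vl k l : map (shift k) (vl l) = vl (map (addn k) l).
Proof. by rewrite /vl -!map_comp. Qed.
Lemma map_subst_vl L l : all (fun i => i < size L) l ->
  map (subst (vl L)) (vl l) = vl (map (nth 0 L) l).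
Proof.
elim: l => //= i l IH /andP [hi hl]. rewrite IH //.
by rewrite /subst /= /vl (nth_map 0).
Qed.

Lemma eval_copy n : eval (copy_n n) = vl (iota 0 n ++ iota 0 n).
Proof.
elim: n => // n IH.
have E1 : eval (TTens copy (copy_n n)) = vl (0 :: 0 :: (iota 1 n ++ iota 1 n)).
  rewrite /= IH shift_vl map_cat -!iotaDl. by [].
have E2 : eval (TTens (TTens (TId 1) (TSym 1 n)) (TId n)) =
          vl (0 :: (iota 2 n ++ [:: 1]) ++ iota (2 + n) n).
  rewrite /= !shift_vl !map_cat -!iotaDl /=.
  have -> : 1 + (1 + n) + 0 = 2 + n by lia. by rewrite /vl !map_cat.
change (eval (copy_n n.+1)) with
  (map (subst (eval (TTens copy (copy_n n)))) (eval (TTens (TTens (TId 1) (TSym 1 n)) (TId n)))).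
rewrite E1 E2 map_subst_vl; last first.
  apply/allP => i; rewrite /= !inE !mem_cat !mem_iota size_cat !size_iota /= ?inE => h; lia.
congr vl. rewrite /= !map_cat /=.
rewrite !map_nth_iota /= ?size_cat ?size_iota; try lia.
rewrite add0n drop0 drop_cat !take_cat !size_iota ltnn subnn take0 cats0 drop0 take_oversize ?size_iota // -catA.
by [].
Qed.

Lemma map_ext_nth (f : expr -> expr) s :
  (forall j, j < size s -> f (nth Zero s j) = nth Zero s j) -> map f s = s.
Proof.
move=> h; apply: (@eq_from_nth _ Zero); rewrite ?size_map // => j hj.
by rewrite (nth_map Zero) // h.
Qed.

Lemma nth_copyL n i : i < n -> nth Zero (vl (iota 0 n ++ iota 0 n)) i = Var i.
Proof. by move=> h; rewrite /vl map_cat nth_cat size_map size_iota h nth_vl_iota. Qed.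
Lemma nth_copyR n i : i < n -> nth Zero (vl (iota 0 n ++ iota 0 n)) (n + i) = Var i.
Proof.
move=> h; rewrite /vl map_cat nth_cat size_map size_iota ifF; last lia.
by rewrite nth_vl_iota; last lia; rewrite /= addKn.
Qed.

Lemma eval_pair X Y n p q : T X n p -> T Y n q ->
  eval (TComp (copy_n n) (TTens X Y)) = eval X ++ eval Y.
Proof.
move=> tX tY. have [dX _] := tyEval tX. have [dY _] := tyEval tY.
rewrite /= eval_copy map_cat dX -map_comp. congr (_ ++ _).
- apply: map_ext_nth => j _. rewrite /subst -[RHS]substf_id. apply: substf_ext => i hi.
  have := scoped_eval hi; rewrite dX => {}hi. exact: nth_copyL.
- apply: map_ext_nth => j _. rewrite /= /shift /subst substf_comp -[RHS]substf_id.
  apply: substf_ext => i hi /=. have := scoped_eval hi; rewrite dY => {}hi. exact: nth_copyR.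
Qed.

Definition clip n := substf (fun i => if i < n then Var i else Zero).

Lemma Cclip n e : C n (clip n e) = C n e.
Proof.
rewrite /clip; elim: e => //= [i|x -> y ->|x -> y ->] //. case: ifP => h //=; by rewrite h.
Qed.

Lemma eval_C n e : eval (C n e) = [:: clip n e].
Proof.
elim: e => [i|||x IHx y IHy|x IHx y IHy]; try by [].
- rewrite /clip /=; case: ifP => h //=. by rewrite !eval_disc !idom_disc /= /shift /= addn0.
- change (eval (C n (Add x y))) with
    (map (subst (eval (TComp (copy_n n) (TTens (C n x) (C n y))))) [:: Add (Var 0) (Var 1)]).
  by rewrite (eval_pair (tyCe n x) (tyCe n y)) IHx IHy.
- change (eval (C n (Mul x y))) with
    (map (subst (eval (TComp (copy_n n) (TTens (C n x) (C n y))))) [:: Mul (Var 0) (Var 1)]).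
  by rewrite (eval_pair (tyCe n x) (tyCe n y)) IHx IHy.
Qed.

Fixpoint Ct n es := match es with
 | [::] => discard_n n
 | e :: es => TComp (copy_n n) (TTens (C n e) (Ct n es)) end.

Lemma tyCt n es : T (Ct n es) n (size es).
Proof. elim: es => [|e es IH] /=; first exact: tyD. by rewrite tyCn tyCe IH eqxx. Qed.

Lemma eval_Ct n es : eval (Ct n es) = map (clip n) es.
Proof.
elim: es => [|e es IH]; first exact: eval_disc.
change (eval (TComp (copy_n n) (TTens (C n e) (Ct n es))) = clip n e :: map (clip n) es).
by rewrite (eval_pair (tyCe n e) (tyCt n es)) eval_C IH.
Qed.

Lemma ID1 t n : T t n 1 -> t =A C n (nth Zero (eval t) 0).
Proof. move=> h. transitivity (TComp t (pi 1 0)); last exact: MAIN h 0 isT. rewrite pi10 (idr h); reflexivity. Qed.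

Lemma axC n xs L R e1 e2 : T L (size xs) 1 -> T R (size xs) 1 -> L =A R ->
  map (subst (map (clip n) xs)) (eval L) = [:: clip n e1] ->
  map (subst (map (clip n) xs)) (eval R) = [:: clip n e2] -> C n e1 =A C n e2.
Proof.
move=> tL tR LR h1 h2.
have t1 : T (TComp (Ct n xs) L) n 1 by rewrite /= tyCt tL eqxx.
have t2 : T (TComp (Ct n xs) R) n 1 by rewrite /= tyCt tR eqxx.
rewrite -Cclip -[C n e2]Cclip.
have := ID1 t1; rewrite /= eval_Ct h1 /= => <-.
have := ID1 t2; rewrite /= eval_Ct h2 /= => <-.
rewrite LR. reflexivity.
Qed.

Lemma Crq e f : req e f -> forall n, C n e =A C n f.
Proof.
elim=> {e f} [e|e f _ IH|e f g _ IH1 _ IH2|x x' y y' _ IHx _ IHy|x x' y y' _ IHx _ IHy|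
  x y|x y z|x|x|x y|x y z|x|x y z] n.
- reflexivity.
- symmetry; exact: IH.
- rewrite IH1 IH2; reflexivity.
- rewrite /= IHx IHy; reflexivity.
- rewrite /= IHx IHy; reflexivity.
- apply: (@axC n [:: x; y] Defs.add (TComp sigma Defs.add)) => //.
  symmetry; apply: aA; exact: A_add_comm.
- apply: (@axC n [:: x; y; z] (TComp (TTens Defs.add (TId 1)) Defs.add)
     (TComp (TTens (TId 1) Defs.add) Defs.add)) => //.
  apply: aA; exact: A_add_assoc.
- apply: (@axC n [:: x] (TComp (TTens Defs.zero (TId 1)) Defs.add) (TId 1)) => //.
  apply: aA; exact: A_add_unitl.
- apply: (@axC n [:: x] (TComp copy Defs.add) (TComp discard Defs.zero)) => //.
  apply: aA; exact: A_copy_add.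
- apply: (@axC n [:: x; y] Defs.and_ (TComp sigma Defs.and_)) => //.
  symmetry; apply: aA; exact: A_and_comm.
- apply: (@axC n [:: x; y; z] (TComp (TTens Defs.and_ (TId 1)) Defs.and_)
     (TComp (TTens (TId 1) Defs.and_) Defs.and_)) => //.
  apply: aA; exact: A_and_assoc.
- apply: (@axC n [:: x] (TComp (TTens Defs.one (TId 1)) Defs.and_) (TId 1)) => //.
  apply: aA; exact: A_and_unitl.
- apply: (@axC n [:: x; y; z] (TComp (TTens (TId 1) Defs.add) Defs.and_)
    (TComp (TTens copy (TId 2))
      (TComp (TTens (TTens (TId 1) sigma) (TId 1))
        (TComp (TTens Defs.and_ Defs.and_) Defs.add)))) => //.
  apply: aA; exact: A_distr.
Qed.

Fixpoint bsem e (r : nat -> bool) : bool := match e with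
 | Var i => r i | Zero => false | One => true
 | Add x y => bsem x r (+) bsem y r | Mul x y => bsem x r && bsem y r end.

Definition upd (r : nat -> bool) k b := fun i => if i == k then b else r i.

Fixpoint D k (F : (nat -> bool) -> bool) : expr := match k with
 | 0 => if F (fun _ => false) then One else Zero
 | k'.+1 => Add (Mul (Var k') (D k' (fun r => F (upd r k' true) (+) F (upd r k' false))))
               (D k' (fun r => F (upd r k' false))) end.

Lemma D_ext k F G : (forall r, F r = G r) -> D k F = D k G.
Proof.
elim: k F G => [|k IH] F G h /=; first by rewrite h.
by congr (Add (Mul _ _) _); apply: IH => r; rewrite !h.
Qed.

Lemma D0 k : req (D k (fun _ => false)) Zero.
Proof.
elim: k => [|k IH] /=; first reflexivity.
rewrite IH. ring.
Qed.

Lemma D1 k : req (D k (fun _ => true)) One.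
Proof.
elim: k => [|k IH] /=; first reflexivity.
rewrite IH D0. ring.
Qed.

Lemma DV k i : i < k -> req (D k (fun r => r i)) (Var i).
Proof.
elim: k => [|k IH] // hi /=.
case: (ltnP i k) => hik.
- have hne : (i == k) = false by apply/negbTE/eqP; lia.
  rewrite (@D_ext k _ (fun _ => false)); last by move=> r; rewrite /upd /= hne addbb.
  rewrite (@D_ext k (fun r => upd r k false i) (fun r => r i)); last by move=> r; rewrite /upd /= hne.
  rewrite D0 IH //. ring.
- have -> : i = k by lia.
  rewrite (@D_ext k _ (fun _ => true)); last by move=> r; rewrite /upd /= eqxx.
  rewrite (@D_ext k (fun r => upd r k false k) (fun _ => false)); last by move=> r; rewrite /upd /= eqxx.
  rewrite D0 D1. ring.
Qed.

Lemma DAdd k F G : req (Add (D k F) (D k G)) (D k (fun r => F r (+) G r)).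
Proof.
elim: k F G => [|k IH] F G /=.
  case: (F _); case: (G _) => /=; try ring. exact: rq_addxx.
set A1 := D k (fun r => F (upd r k true) (+) F (upd r k false)).
set B1 := D k (fun r => F (upd r k false)).
set A2 := D k (fun r => G (upd r k true) (+) G (upd r k false)).
set B2 := D k (fun r => G (upd r k false)).
transitivity (Add (Mul (Var k) (Add A1 A2)) (Add B1 B2)); first ring.
rewrite /A1 /A2 /B1 /B2 !IH.
rewrite (@D_ext k (fun r => (F (upd r k true) (+) F (upd r k false)) (+) (G (upd r k true) (+) G (upd r k false)))
   (fun r => (F (upd r k true) (+) G (upd r k true)) (+) (F (upd r k false) (+) G (upd r k false)))); first reflexivity.
move=> r. by case: (F _); case: (F _); case: (G _); case: (G _).
Qed.

Definition indep (F : (nat -> bool) -> bool) i := forall r b, F (upd r i b) = F r.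

Lemma upd_comm r i b k c : i != k -> upd (upd r i b) k c = upd (upd r k c) i b.
Proof.
move=> h; apply: functional_extensionality => j; rewrite /upd.
case: (eqVneq j k) => [ejk|njk]; case: (eqVneq j i) => [eji|nji] //.
by move: h; rewrite -eji -ejk eqxx.
Qed.

Lemma DMul_step k F G :
  (forall F G, (forall i, i < k -> indep F i \/ indep G i) ->
      req (Mul (D k F) (D k G)) (D k (fun r => F r && G r))) ->
  (forall i, i < k.+1 -> indep F i \/ indep G i) -> indep G k ->
  req (Mul (D k.+1 F) (D k.+1 G)) (D k.+1 (fun r => F r && G r)).
Proof.
move=> IH hi hG /=.
rewrite (@D_ext k (fun r => G (upd r k true) (+) G (upd r k false)) (fun _ => false)); last first.
  by move=> r; rewrite !hG addbb.
rewrite (@D_ext k (fun r => G (upd r k false)) G) //.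
rewrite (@D_ext k (fun r => (F (upd r k true) && G (upd r k true)) (+) (F (upd r k false) && G (upd r k false)))
   (fun r => (F (upd r k true) (+) F (upd r k false)) && G r)); last first.
  by move=> r; rewrite !hG; case: (F _); case: (F _); case: (G _).
rewrite (@D_ext k (fun r => F (upd r k false) && G (upd r k false)) (fun r => F (upd r k false) && G r)); last first.
  by move=> r; rewrite hG.
rewrite D0.
have hk : forall i, i < k -> forall b, indep F i -> indep (fun r => F (upd r k b)) i.
  move=> i ik b hF r c /=. rewrite -upd_comm ?hF //. apply/eqP; lia.
set A := D k (fun r => F (upd r k true) (+) F (upd r k false)).
set B := D k (fun r => F (upd r k false)).
transitivity (Add (Mul (Var k) (Mul A (D k G))) (Mul B (D k G))); first ring.
rewrite /A /B !IH; first reflexivity.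
- move=> i ik; case: (hi i (ltnW ik)) => h; last by right.
  left; exact: hk.
- move=> i ik; case: (hi i (ltnW ik)) => h; last by right.
  left => r c /=. by rewrite (hk i ik true h) (hk i ik false h).
Qed.

Lemma DMul k F G : (forall i, i < k -> indep F i \/ indep G i) ->
  req (Mul (D k F) (D k G)) (D k (fun r => F r && G r)).
Proof.
elim: k F G => [|k IH] F G hi.
  rewrite /=; case: (F _); case: (G _) => /=; ring.
case: (hi k (ltnSn k)) => h.
- rewrite rq_mulC DMul_step //.
  + rewrite (@D_ext k.+1 (fun r => G r && F r) (fun r => F r && G r)); first reflexivity.
    by move=> r; rewrite andbC.
  + by move=> i /hi [] ?; [right|left].
- exact: DMul_step.
Qed.

Lemma bsem_indep e i : ~~ occ i e -> indep (bsem e) i.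
Proof.
move=> h r b; elim: e h => //= [j|x IHx y IHy|x IHx y IHy].
- by rewrite /upd eq_sym => /negbTE ->.
- by rewrite negb_or => /andP [/IHx -> /IHy ->].
- by rewrite negb_or => /andP [/IHx -> /IHy ->].
Qed.

Fixpoint sep e : Prop := match e with
 | Add x y => sep x /\ sep y
 | Mul x y => [/\ sep x, sep y & forall i, occ i x -> ~~ occ i y]
 | _ => True end.

Lemma NF k e : sep e -> (forall i, occ i e -> i < k) -> req e (D k (bsem e)).
Proof.
elim: e => [i|||x IHx y IHy|x IHx y IHy] /= hs hk.
- rewrite DV; [reflexivity | apply: hk; exact: eqxx].
- rewrite D0. reflexivity.
- rewrite D1. reflexivity.
- case: hs => sx sy.
  transitivity (Add (D k (bsem x)) (D k (bsem y))).
    apply: rq_add; [apply: IHx | apply: IHy] => // i hi; apply: hk; by rewrite hi ?orbT.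
  rewrite DAdd; reflexivity.
- case: hs => sx sy dj.
  transitivity (Mul (D k (bsem x)) (D k (bsem y))).
    apply: rq_mul; [apply: IHx | apply: IHy] => // i hi; apply: hk; by rewrite hi ?orbT.
  rewrite DMul; first reflexivity.
  move=> i _. case hx: (occ i x).
  + by right; apply: bsem_indep; apply: dj.
  + by left; apply: bsem_indep; rewrite hx.
Qed.

Definition vf n (f : nat -> nat) := vl (map f (iota 0 n)).

Lemma vf_ext n m f g : n = m -> (forall i, i < n -> f i = g i) -> vf n f = vf m g.
Proof.
move=> <- h; rewrite /vf; congr vl; apply/eq_in_map => i; rewrite mem_iota => /andP [_ hi].
by apply: h.
Qed.
Lemma iota_vf s k : vl (iota s k) = vf k (fun i => s + i).
Proof. by rewrite /vf -iotaDl addn0. Qed.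
Lemma vf_cat n m f g : vf n f ++ vf m g = vf (n + m) (fun i => if i < n then f i else g (i - n)).
Proof.
rewrite /vf /vl -map_cat; congr (map Var _); rewrite iotaD map_cat; congr (_ ++ _).
- apply/eq_in_map => i; rewrite mem_iota => /andP [_ hi]. by rewrite /= hi.
- have -> : iota (0 + n) m = map (addn n) (iota 0 m) by rewrite -iotaDl add0n addn0.
  rewrite -map_comp; apply/eq_in_map => i; rewrite mem_iota => /andP [_ hi].
  rewrite /= ifF; last lia. by rewrite addKn.
Qed.
Lemma vf_shift k n f : map (shift k) (vf n f) = vf n (fun i => k + f i).
Proof. by rewrite /vf /vl -!map_comp. Qed.
Lemma vf_subst n p m q : (forall i, i < m -> q i < n) ->
  map (subst (vf n p)) (vf m q) = vf m (fun i => p (q i)).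
Proof.
move=> h; rewrite /vf /vl -!map_comp; apply/eq_in_map => i; rewrite mem_iota => /andP [_ hi].
have hq : q i < n by apply: h; lia.
by rewrite /= /subst /= (nth_map 0) ?size_iota // nth_iota.
Qed.

Lemma evId n : eval (TId n) = vf n (fun i => i).
Proof. by rewrite /= iota_vf. Qed.
Lemma evSym a b : eval (TSym a b) = vf (b + a) (fun i => if i < b then a + i else i - b).
Proof. by rewrite /= /vl map_cat -!/(vl _) !iota_vf vf_cat; apply: vf_ext => // i hi; rewrite add0n. Qed.
Lemma evCopy n : eval (copy_n n) = vf (n + n) (fun i => if i < n then i else i - n).
Proof. by rewrite eval_copy /vl map_cat -!/(vl _) !iota_vf vf_cat; apply: vf_ext => // i hi; rewrite !add0n. Qed.

Ltac arith := move=> *; repeat (case: ifP => ?); lia.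

Definition semeq s t := [/\ idom s = idom t, size (eval s) = size (eval t) &
  forall r j, bsem (nth Zero (eval s) j) r = bsem (nth Zero (eval t) j) r].

Lemma semeq_eq s t : idom s = idom t -> eval s = eval t -> semeq s t.
Proof. by move=> h1 h2; split=> //; rewrite h2. Qed.

Lemma bsem_substf s e r : bsem (substf s e) r = bsem e (fun i => bsem (s i) r).
Proof. by elim: e => //= x -> y ->. Qed.
Lemma bsem_ext e r r' : (forall i, r i = r' i) -> bsem e r = bsem e r'.
Proof. by move=> h; elim: e => //= x -> y ->. Qed.

Lemma semeq_comp f f' g g' : semeq f f' -> semeq g g' -> semeq (TComp f g) (TComp f' g').
Proof.
move=> [d1 s1 h1] [d2 s2 h2]; split => //=; first by rewrite !size_map.
move=> r j; rewrite !nth_map_sub // /subst !bsem_substf h2.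
by apply: bsem_ext => i.
Qed.

Lemma semeq_tens f f' g g' : semeq f f' -> semeq g g' -> semeq (TTens f g) (TTens f' g').
Proof.
move=> [d1 s1 h1] [d2 s2 h2]; split => /=; first by rewrite d1 d2.
  by rewrite !size_cat !size_map s1 s2.
move=> r j; rewrite !nth_cat s1; case: ifP => _ //.
rewrite !nth_map_sub // /shift !bsem_substf d1 h2. by [].
Qed.

Lemma semeq_refl t : semeq t t. Proof. by split. Qed.
Lemma semeq_sym s t : semeq s t -> semeq t s.
Proof. by move=> [h1 h2 h3]; split=> // r j; rewrite h3. Qed.
Lemma semeq_trans s t u : semeq s t -> semeq t u -> semeq s u.
Proof. by move=> [h1 h2 h3] [h4 h5 h6]; split=> //; [rewrite h1 | rewrite h2 | move=> r j; rewrite h3]. Qed.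

Lemma map_eq_nth (f1 f2 : expr -> expr) s :
  (forall j, j < size s -> f1 (nth Zero s j) = f2 (nth Zero s j)) -> map f1 s = map f2 s.
Proof.
move=> h; apply: (@eq_from_nth _ Zero); rewrite ?size_map // => j hj.
by rewrite !(nth_map Zero) // h.
Qed.


Lemma map_subst_iota sg s k : s + k <= size sg -> map (subst sg) (vl (iota s k)) = take k (drop s sg).
Proof.
move=> h; rewrite /vl -map_comp (@eq_map _ _ _ (nth Zero sg)) // map_nth_iota //; lia.
Qed.

Lemma idom_copy n : idom (copy_n n) = n.
Proof. by elim: n => //= n ->. Qed.

Ltac destr_if := repeat match goal with |- context [if ?c then _ else _] =>
  lazymatch c with context [if _ then _ else _] => fail | _ => let E := fresh "E" in destruct c eqn:E end end.
Ltac arith2 := move=> i hi /=; destr_if; lia.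

Lemma semeq_smc s t : smc s t -> semeq s t.
Proof.
case=> {s t}.
- move=> f g h a b c d tf tg th. apply: semeq_eq => //=.
  rewrite -map_comp; apply/eq_map => e /=. rewrite /subst substf_comp.
  apply: substf_ext => i _. exact: nth_map_sub.
- move=> f a b tf. have [df sf] := tyEval tf. apply: semeq_eq => //=.
  apply: map_ext_nth => j _. rewrite /subst -[RHS]substf_id. apply: substf_ext => i hi.
  have := scoped_eval hi; rewrite df => {}hi. exact: nth_vl_iota.
- move=> f a b tf. have [df sf] := tyEval tf. apply: semeq_eq => //=.
  by rewrite -sf map_subst_iota ?drop0 ?take_size.
- move=> f g h a b c d e k _ _ _. apply: semeq_eq; first by rewrite /= addnA.
  rewrite /= map_cat catA -map_comp. congr (_ ++ _). apply/eq_map => x /=.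
  rewrite /shift substf_comp. apply: substf_ext => i _ /=. by rewrite addnA.
- move=> f a b _. apply: semeq_eq => //=. rewrite -[RHS]map_id. apply/eq_map => x.
  rewrite /shift -[RHS]substf_id. by apply: substf_ext.
- move=> f a b _. apply: semeq_eq => /=; first by rewrite addn0. by rewrite cats0.
- move=> m n. apply: semeq_eq => //=. rewrite !iota_vf vf_shift vf_cat.
  apply: vf_ext => //; arith2.
- move=> f g h k a b c a' b' c' tf tg th tk.
  have [df sf] := tyEval tf. have [dg sg] := tyEval tg.
  have [dh sh] := tyEval th. have [dk sk] := tyEval tk.
  apply: semeq_eq => //=. rewrite map_cat. congr (_ ++ _).
  + apply: map_eq_nth => j _. rewrite /subst. apply: substf_ext => i hi.
    have := scoped_eval hi; rewrite dg -sf => {}hi. by rewrite nth_cat hi.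
  + rewrite -!map_comp. apply/eq_map => x /=. rewrite /subst /shift !substf_comp.
    apply: substf_ext => i _ /=. rewrite nth_cat ifF; last lia.
    by rewrite dg sf addKn nth_map_sub // df.
- move=> a b. apply: semeq_eq => /=; first by rewrite addnC.
  change (map (subst (eval (TSym a b))) (eval (TSym b a)) = eval (TId (a + b))).
  rewrite !evSym evId vf_subst; last by arith2.
  apply: vf_ext; [lia | arith2].
- move=> a b c. apply: semeq_eq => /=; first by rewrite addnA.
  change (eval (TSym a (b + c)) = map (subst (eval (TSym a b) ++ map (shift (a + b)) (eval (TId c))))
     (eval (TId b) ++ map (shift b) (eval (TSym a c)))).
  rewrite !evSym !evId !vf_shift !vf_cat vf_subst; last by arith2.
  apply: vf_ext; [lia | arith2].
- move=> a b c. apply: semeq_eq => /=; first by rewrite addnA.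
  change (eval (TSym (a + b) c) = map (subst (eval (TId a) ++ map (shift a) (eval (TSym b c))))
     (eval (TSym a c) ++ map (shift (a + c)) (eval (TId b)))).
  rewrite !evSym !evId !vf_shift !vf_cat vf_subst; last by arith2.
  apply: vf_ext; [lia | arith2].
- move=> f g a b c d tf tg.
  have [df sf] := tyEval tf. have [dg sg] := tyEval tg.
  apply: semeq_eq => /=; first by rewrite df dg.
  have -> : vl (iota c d ++ iota 0 c) = vl (iota c d) ++ vl (iota 0 c) by rewrite /vl map_cat.
  rewrite !map_cat !map_subst_iota; first last.
  + by rewrite size_cat size_map sf sg; lia.
  + by rewrite size_cat size_map sf sg; lia.
  rewrite drop0 take_cat sf ltnn subnn take0 cats0 drop_cat sf ltnn subnn drop0.
  rewrite take_oversize ?size_map ?sg // -map_comp df. congr (_ ++ _).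
  + apply: map_eq_nth => j _ /=. rewrite /subst /shift. apply: substf_ext => i hi.
    have := scoped_eval hi; rewrite dg => {}hi.
    by rewrite /vl map_cat nth_cat size_map size_iota hi nth_vl_iota.
  + rewrite -[LHS]map_id. apply: map_eq_nth => j _ /=. rewrite /subst /shift substf_comp -[LHS]substf_id.
    apply: substf_ext => i hi /=.
    have := scoped_eval hi; rewrite df => {}hi.
    rewrite /vl map_cat nth_cat size_map size_iota ifF; last lia.
    by rewrite dg addKn (nth_map 0) ?size_iota // nth_iota.
Qed.

Ltac conc := split; [reflexivity | reflexivity |
  intros r j; destruct j as [|[|[|j]]]; vm_compute; try reflexivity;
  destruct (r 0), (r 1), (r 2); reflexivity].

Lemma semeq_axA s t : axA s t -> semeq s t.
Proof.
case=> {s t}; try by conc.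
- move=> f a b tf. have [df sf] := tyEval tf.
  apply: semeq_eq; first by rewrite /= df idom_copy.
  change (map (subst (eval f)) (eval (copy_n b)) = eval (TComp (copy_n a) (TTens f f))).
  have h : 0 + b <= size (eval f) by rewrite sf.
  rewrite (eval_pair tf tf) eval_copy.
  have -> : vl (iota 0 b ++ iota 0 b) = vl (iota 0 b) ++ vl (iota 0 b) by rewrite /vl map_cat.
  rewrite map_cat !(map_subst_iota h).
  by rewrite drop0 take_oversize // sf.
- move=> f a b tf. have [df sf] := tyEval tf.
  apply: semeq_eq; first by rewrite /= df idom_disc.
  by rewrite /= !eval_disc.
Qed.

Lemma E_sound c d : eq_modE c d -> semeq c d.
Proof.
elim=> {c d}.
- move=> s t [H|H]; first exact: semeq_smc.
  case: H => [s' t' /semeq_axA //|]. by conc.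
- exact: semeq_refl.
- move=> s t _; exact: semeq_sym.
- move=> s t u _ h1 _ h2; exact: semeq_trans h1 h2.
- move=> f f' g g' _ h1 _ h2; exact: semeq_comp.
- move=> f f' g g' _ h1 _ h2; exact: semeq_tens.
Qed.

Definition rmap (G H : graph) w :=
  if w \in gins H then nth 0 (gouts G) (index w (gins H)) else nw G + w.

Lemma wg_comp f g : let G := wgraph f in let H := wgraph g in
  wgraph (TComp f g) = Graph (nw G + nw H) (gins G) (map (rmap G H) (gouts H))
     (gedges G ++ map (fun e => (rmap G H e.1, rmap G H e.2)) (gedges H))
     (gands G ++ map (fun e => (rmap G H e.1, rmap G H e.2)) (gands H)).
Proof. by []. Qed.

Lemma wg_tens f g : let G := wgraph f in let H := wgraph g in
  wgraph (TTens f g) = Graph (nw G + nw H)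
            (gins G ++ map (addn (nw G)) (gins H))
            (gouts G ++ map (addn (nw G)) (gouts H))
            (gedges G ++ map (shiftp (nw G)) (gedges H))
            (gands G ++ map (shiftp (nw G)) (gands H)).
Proof. by []. Qed.

Definition gwf (G : graph) a b := [/\ size (gins G) = a, size (gouts G) = b,
  all (fun x => x < nw G) (gins G), all (fun x => x < nw G) (gouts G)
  & (forall p q, (p, q) \in gands G -> p < nw G /\ q < nw G) /\ uniq (gins G)].

Lemma gwf_all t a b : T t a b -> gwf (wgraph t) a b.
Proof.
elim: t a b => [g|n|x y|f IHf g IHg|f IHf g IHg] a b;
  [move=> /= | move=> /= | move=> /= | rewrite wg_comp /gwf /= | rewrite wg_tens /gwf /=].
- case=> <- <-; case: g; split=> //=; split=> // p q; rewrite ?inE //= => /eqP [-> ->] //.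
- case=> <- <-; rewrite /gwf /=; split.
  + by rewrite size_iota.
  + by rewrite size_iota.
  + apply/allP => i; rewrite mem_iota /=; lia.
  + apply/allP => i; rewrite mem_iota /=; lia.
  + by rewrite iota_uniq.
- case=> <- <-; rewrite /gwf /=; split.
  + by rewrite size_iota.
  + by rewrite size_cat !size_iota addnC.
  + apply/allP => i; rewrite mem_iota /=; lia.
  + apply/allP => i; rewrite mem_cat !mem_iota /=; lia.
  + by rewrite iota_uniq.
- case ef: (ty f) => [[a1 b1]|] //; case eg: (ty g) => [[b2 c2]|] //.
  case: eqP => // eb; subst b2 => -[<- <-].
  have [s1 s2 a1' a2' [g1 u1]] := IHf _ _ ef. have [s3 s4 a3 a4 [g2 u2]] := IHg _ _ eg.
  have hr : forall w, w < nw (wgraph g) -> rmap (wgraph f) (wgraph g) w < nw (wgraph f) + nw (wgraph g).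
    move=> w hw; rewrite /rmap; case: ifP => h; last lia.
    have : nth 0 (gouts (wgraph f)) (index w (gins (wgraph g))) < nw (wgraph f).
      apply: (allP a2'); apply: mem_nth; rewrite s2 -s3 index_mem //.
    lia.
  split => //; last split => //.
  + by rewrite size_map.
  + apply/allP => x /(allP a1'); lia.
  + apply/allP => x /mapP [w hw ->]; apply: hr; exact: (allP a4).
  + move=> p q; rewrite mem_cat => /orP [/g1|/mapP [[p0 q0] /g2 [hp hq] [-> ->]]]; first lia.
    by split; apply: hr.
- case ef: (ty f) => [[a1 b1]|] //; case eg: (ty g) => [[a2 b2]|] // [<- <-].
  have [s1 s2 a1' a2' [g1 u1]] := IHf _ _ ef. have [s3 s4 a3 a4 [g2 u2]] := IHg _ _ eg.
  split.
  + by rewrite size_cat size_map s1 s3.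
  + by rewrite size_cat size_map s2 s4.
  + apply/allP => x; rewrite mem_cat => /orP [/(allP a1')|/mapP [w /(allP a3) hw ->]]; lia.
  + apply/allP => x; rewrite mem_cat => /orP [/(allP a2')|/mapP [w /(allP a4) hw ->]]; lia.
  + split.
    move=> p q; rewrite mem_cat => /orP [/g1|/mapP [[p0 q0] /g2 [hp hq] [-> ->]]] /=; lia.
    rewrite cat_uniq u1 map_inj_uniq ?u2 ?andbT /=; last exact: addnI.
    apply/hasPn => x /mapP [w _ ->]. apply/negP => /(allP a1'). lia.
Qed.

Fixpoint subm (e f : expr) : Prop := e = f \/ match f with
 | Add x y => subm e x \/ subm e y | Mul x y => subm e x \/ subm e y | _ => False end.

Lemma subm_substf u v s e : subm (Mul u v) (substf s e) ->
  (exists k, occ k e /\ subm (Mul u v) (s k)) \/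
  (exists u0 v0, [/\ subm (Mul u0 v0) e, u = substf s u0 & v = substf s v0]).
Proof.
elim: e => [k|||x IHx y IHy|x IHx y IHy] /=.
- by move=> h; left; exists k; rewrite eqxx.
- by case.
- by case.
- case=> // -[/IHx|/IHy] [[k [h1 h2]]|[u0 [v0 [h1 h2 h3]]]].
  + by left; exists k; rewrite h1.
  + by right; exists u0, v0; split=> //; right; left.
  + by left; exists k; rewrite h1 orbT.
  + by right; exists u0, v0; split=> //; right; right.
- case=> [[-> ->]|[/IHx|/IHy] [[k [h1 h2]]|[u0 [v0 [h1 h2 h3]]]]].
  + by right; exists x, y; split=> //; left.
  + by left; exists k; rewrite h1.
  + by right; exists u0, v0; split=> //; right; left.
  + by left; exists k; rewrite h1 orbT.
  + by right; exists u0, v0; split=> //; right; right.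
Qed.

Lemma subm_shift u v k e : subm (Mul u v) (shift k e) ->
  exists u0 v0, [/\ subm (Mul u0 v0) e, u = shift k u0 & v = shift k v0].
Proof. by case/subm_substf => [[i [_ [|]]] //|]. Qed.

Lemma reach_map (G H : graph) h x y :
  (forall x y, (x, y) \in gedges G -> (h x, h y) \in gedges H) -> reach G x y -> reach H (h x) (h y).
Proof.
move=> hE; elim=> {x y} [x y /hE|x|x y z _ IH1 _ IH2].
- exact: rt_step.
- exact: rt_refl.
- exact: rt_trans IH1 IH2.
Qed.

Definition Inv t a b := exists W : nat -> expr,
 [/\ (forall i, i < a -> W (nth 0 (gins (wgraph t)) i) = Var i),
     (forall j, j < b -> W (nth 0 (gouts (wgraph t)) j) = nth Zero (eval t) j),
     (forall w, w < nw (wgraph t) -> forall i, occ i (W w) ->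
          i < a /\ reach (wgraph t) (nth 0 (gins (wgraph t)) i) w)
   & (forall w, w < nw (wgraph t) -> forall u v, subm (Mul u v) (W w) ->
        exists p q, [/\ (p, q) \in gands (wgraph t), W p = u & W q = v])].

Lemma Inv_gen g : Inv (TGen g) (gdom g) (gcod g).
Proof.
case: g.
- exists (fun w => nth Zero [:: Var 0] w); split => /=.
  + by case.
  + by [].
  + move=> [|w] //= _ i /eqP ->; split=> //; exact: rt_refl.
  + by move=> [|w] //= _ u v [].
- exists (fun w => nth Zero [:: Var 0; Var 0; Var 0] w); split => /=.
  + by case.
  + by move=> [|[|j]].
  + move=> [|[|[|w]]] //= _ i /eqP ->; split=> //; try exact: rt_refl; by apply: rt_step.
  + by move=> [|[|[|w]]] //= _ u v [].
- exists (fun w => nth Zero [:: Zero] w); split => /=.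
  + by [].
  + by case.
  + by move=> [|w].
  + by move=> [|w] //= _ u v [].
- exists (fun w => nth Zero [:: Var 0; Var 1; Add (Var 0) (Var 1)] w); split => /=.
  + by move=> [|[|i]].
  + by case.
  + move=> [|[|[|w]]] //= _ i; try (move/eqP ->; split=> //; exact: rt_refl).
    case/orP => /eqP -> ; split=> //; by apply: rt_step.
  + by move=> [|[|[|w]]] //= _ u v; intuition discriminate.
- exists (fun w => nth Zero [:: One] w); split => /=.
  + by [].
  + by case.
  + by move=> [|w].
  + by move=> [|w] //= _ u v [].
- exists (fun w => nth Zero [:: Var 0; Var 1; Mul (Var 0) (Var 1)] w); split => /=.
  + by move=> [|[|i]].
  + by case.
  + move=> [|[|[|w]]] //= _ i; try (move/eqP ->; split=> //; exact: rt_refl).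
    case/orP => /eqP -> ; split=> //; by apply: rt_step.
  + move=> [|[|[|w]]] //= _ u v; try by case.
    case=> [[-> ->]|[[]|[]]] //. by exists 0, 1.
Qed.

Lemma Inv_all t : forall a b, T t a b -> Inv t a b.
Proof.
elim: t => [g|n|x y|f IHf g IHg|f IHf g IHg] a b.
- by case=> <- <-; exact: Inv_gen.
- case=> <- <-; exists Var; split => /=.
  + by move=> i hi; rewrite nth_iota.
  + by move=> j hj; rewrite nth_iota // nth_vl_iota.
  + move=> w hw i /eqP ->; rewrite nth_iota //; split=> //; exact: rt_refl.
  + by move=> w _ u v [].
- case=> <- <-; exists Var; split => /=.
  + by move=> i hi; rewrite nth_iota.
  + move=> j hj. rewrite /vl (nth_map 0) // size_cat !size_iota; lia.
  + move=> w hw i /eqP ->; rewrite nth_iota //; split=> //; exact: rt_refl.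
  + by move=> w _ u v [].
- rewrite /=.
  case ef: (ty f) => [[a1 b1]|] //; case eg: (ty g) => [[b2 c2]|] //.
  case: eqP => // eb; subst b2 => -[<- <-].
  have [WG [G1 G2 G3 G4]] := IHf _ _ ef. have [WH [H1 H2 H3 H4]] := IHg _ _ eg.
  have [s1 s2 a1' a2' [g1 u1]] := gwf_all ef. have [s3 s4 a3 a4 [g2 u2]] := gwf_all eg.
  have [df sf] := tyEval ef.
  rewrite /Inv wg_comp /=.
  set Gf := wgraph f in G1 G2 G3 G4 s1 s2 a1' a2' g1 u1 *.
  set Hg := wgraph g in H1 H2 H3 H4 s3 s4 a3 a4 g2 u2 *.
  set N := nw Gf.
  set rm := rmap Gf Hg.
  set W' := fun w => if w < N then WG w else if (w - N) \in gins Hg then Zero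
                     else subst (eval f) (WH (w - N)).
  have oG : forall k, k < b1 -> nth 0 (gouts Gf) k < N.
    by move=> k hk; apply: (allP a2'); apply: mem_nth; rewrite s2.
  have iG : forall k, k < a1 -> nth 0 (gins Gf) k < N.
    by move=> k hk; apply: (allP a1'); apply: mem_nth; rewrite s1.
  have rin : forall k, k < b1 -> rm (nth 0 (gins Hg) k) = nth 0 (gouts Gf) k.
    move=> k hk; rewrite /rm /rmap mem_nth ?s3 // index_uniq // s3 //.
  have Wr : forall w, w < nw Hg -> W' (rm w) = subst (eval f) (WH w).
    move=> w hw; rewrite /rm /rmap /W'. case hin: (w \in gins Hg).
    + have hk : index w (gins Hg) < b1 by rewrite -s3 index_mem.
      rewrite ifT; last exact: oG.
      rewrite G2 // -[in RHS](nth_index 0 hin) H1 //.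
    + rewrite ifF; last lia. by rewrite addKn hin.
  have eE : forall x y, (x, y) \in gedges Gf -> (x, y) \in gedges Gf ++
      map (fun e => (rm e.1, rm e.2)) (gedges Hg) by move=> x y h; rewrite mem_cat h.
  have eH : forall x y, (x, y) \in gedges Hg -> (rm x, rm y) \in gedges Gf ++
      map (fun e => (rm e.1, rm e.2)) (gedges Hg).
    by move=> x y h; rewrite mem_cat; apply/orP; right; apply/mapP; exists (x, y).
  exists W'; split.
  + move=> i hi. rewrite /W' ifT; [exact: G1 | exact: iG].
  + move=> j hj. rewrite (nth_map 0) ?s4 // Wr; last by apply: (allP a4); apply: mem_nth; rewrite s4.
    by rewrite H2 // nth_map_sub.
  + move=> w hw i. rewrite /W'. case: ifP => hwN.
    * move=> /(G3 _ hwN) [hi hr]; split=> //.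
      exact: (@reach_map Gf (Graph (nw Gf + nw Hg) (gins Gf) (map rm (gouts Hg))
         (gedges Gf ++ map (fun e => (rm e.1, rm e.2)) (gedges Hg))
         (gands Gf ++ map (fun e => (rm e.1, rm e.2)) (gands Hg))) id _ _ eE hr).
    case: ifP => // hin.
    move=> /occ_substf [k [hk1 hk2]].
    have [hk hrH] := H3 (w - N) ltac:(lia) k hk1.
    rewrite -G2 // in hk2. have [hi hrG] := G3 _ (oG k hk) i hk2.
    split=> //.
    apply: rt_trans.
      exact: (@reach_map Gf (Graph (nw Gf + nw Hg) (gins Gf) (map rm (gouts Hg))
         (gedges Gf ++ map (fun e => (rm e.1, rm e.2)) (gedges Hg))
         (gands Gf ++ map (fun e => (rm e.1, rm e.2)) (gands Hg))) id _ _ eE hrG).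
    have := (@reach_map Hg (Graph (nw Gf + nw Hg) (gins Gf) (map rm (gouts Hg))
         (gedges Gf ++ map (fun e => (rm e.1, rm e.2)) (gedges Hg))
         (gands Gf ++ map (fun e => (rm e.1, rm e.2)) (gands Hg))) rm _ _ eH hrH).
    rewrite rin // /rm /rmap hin.
    have -> : nw Gf + (w - N) = w by rewrite /N; lia.
    by [].
  + move=> w hw u v.
    have eW : W' w = if w < N then WG w else if (w - N) \in gins Hg then Zero
                     else subst (eval f) (WH (w - N)) by [].
    rewrite eW. case: ifP => hwN.
    * move=> /(G4 _ hwN) [p [q [hpq <- <-]]]. exists p, q.
      have [hp hq] := g1 _ _ hpq. by rewrite mem_cat hpq /W' hp hq.
    case: ifP => hin; first by case.
    case/subm_substf => [[k [hk1 hk2]]|[u0 [v0 [hs -> ->]]]].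
    * have [hk _] := H3 (w - N) ltac:(lia) k hk1.
      rewrite -G2 // in hk2. have [p [q [hpq <- <-]]] := G4 _ (oG k hk) _ _ hk2.
      have [hp hq] := g1 _ _ hpq. exists p, q. by rewrite mem_cat hpq /W' hp hq.
    * have [p [q [hpq hp hq]]] := H4 (w - N) ltac:(lia) _ _ hs.
      have [bp bq] := g2 _ _ hpq.
      exists (rm p), (rm q). rewrite !Wr // hp hq; split=> //.
      rewrite mem_cat; apply/orP; right; apply/mapP; by exists (p, q).
- rewrite /=.
  case ef: (ty f) => [[a1 b1]|] //; case eg: (ty g) => [[a2 b2]|] // [<- <-].
  have [WG [G1 G2 G3 G4]] := IHf _ _ ef. have [WH [H1 H2 H3 H4]] := IHg _ _ eg.
  have [s1 s2 a1' a2' [g1 u1]] := gwf_all ef. have [s3 s4 a3 a4 [g2 u2]] := gwf_all eg.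
  have [df sf] := tyEval ef.
  rewrite /Inv wg_tens /=.
  set Gf := wgraph f in G1 G2 G3 G4 s1 s2 a1' a2' g1 u1 *.
  set Hg := wgraph g in H1 H2 H3 H4 s3 s4 a3 a4 g2 u2 *.
  set N := nw Gf.
  set W' := fun w => if w < N then WG w else shift a1 (WH (w - N)).
  set G' := Graph (N + nw Hg) (gins Gf ++ map (addn N) (gins Hg))
            (gouts Gf ++ map (addn N) (gouts Hg))
            (gedges Gf ++ map (shiftp N) (gedges Hg))
            (gands Gf ++ map (shiftp N) (gands Hg)).
  have eE : forall x y, (x, y) \in gedges Gf -> (id x, id y) \in gedges G'
    by move=> x y h; rewrite mem_cat h.
  have eH : forall x y, (x, y) \in gedges Hg -> (addn N x, addn N y) \in gedges G'.
    by move=> x y h; rewrite mem_cat; apply/orP; right; apply/mapP; exists (x, y).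
  have WH' : forall w, W' (N + w) = shift a1 (WH w).
    by move=> w; rewrite /W' ifF ?addKn //; lia.
  exists W'; split.
  + move=> i hi. rewrite nth_cat s1. case: ifP => h.
    * rewrite /W' ifT; first exact: G1. by apply: (allP a1'); apply: mem_nth; rewrite s1.
    * rewrite (nth_map 0) ?s3; last lia.
      rewrite WH' H1; last lia. rewrite /shift /=. congr Var. lia.
  + move=> j hj. rewrite nth_cat s2 /= nth_cat sf. case: ifP => h.
    * rewrite /W' ifT; first exact: G2. by apply: (allP a2'); apply: mem_nth; rewrite s2.
    * rewrite (nth_map 0) ?s4; last lia.
      rewrite WH' H2; last lia. by rewrite nth_map_sub // df.
  + move=> w hw i. rewrite /W'. case: ifP => hwN.
    * move=> /(G3 _ hwN) [hi hr]; split; first lia.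
      rewrite nth_cat s1 ifT //. exact: (reach_map eE hr).
    * move=> /occ_shift [i' [-> hi']].
      have [hi hr] := H3 (w - N) ltac:(lia) i' hi'. split; first lia.
      rewrite nth_cat s1 ifF; last lia.
      rewrite (nth_map 0) ?s3; last lia. rewrite addKn.
      have := reach_map eH hr. by have -> : N + (w - N) = w by lia.
  + move=> w hw u v.
    have eW : W' w = if w < N then WG w else shift a1 (WH (w - N)) by [].
    rewrite eW. case: ifP => hwN.
    * move=> /(G4 _ hwN) [p [q [hpq <- <-]]]. exists p, q.
      have [hp hq] := g1 _ _ hpq. by rewrite mem_cat hpq /W' hp hq.
    * case/subm_shift => [u0 [v0 [hs -> ->]]].
      have [p [q [hpq hp hq]]] := H4 (w - N) ltac:(lia) _ _ hs.
      exists (N + p), (N + q). rewrite !WH' hp hq; split=> //.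
      rewrite mem_cat; apply/orP; right; apply/mapP; by exists (p, q).
Qed.

Lemma subm_refl e : subm e e. Proof. by case: e => *; left. Qed.

Lemma sep_of e : (forall u v, subm (Mul u v) e -> forall i, occ i u -> ~~ occ i v) -> sep e.
Proof.
elim: e => //= [x IHx y IHy|x IHx y IHy] h.
- split; [apply: IHx | apply: IHy] => u v hs; apply: h; right; by [left|right].
- split; [apply: IHx | apply: IHy | ] => [u v hs|u v hs|]; try (apply: h; right; by [left|right]).
  apply: h; left; reflexivity.
Qed.

Lemma safe_sep t a b : T t a b -> safe t -> forall j, sep (nth Zero (eval t) j).
Proof.
move=> ht hs j.
have [W [I1 I2 I3 I4]] := Inv_all ht. have [s1 s2 a1 a2 [g1 u1]] := gwf_all ht.
case: (ltnP j b) => hj; last by rewrite nth_default //; have [_ ->] := tyEval ht.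
rewrite -I2 //. apply: sep_of => u v hsub i hu.
have hw : nth 0 (gouts (wgraph t)) j < nw (wgraph t).
  by apply: (allP a2); apply: mem_nth; rewrite s2.
have [p [q [hpq hp hq]]] := I4 _ hw _ _ hsub.
have [bp bq] := g1 _ _ hpq.
apply/negP => hv.
rewrite -hp in hu. rewrite -hq in hv.
have [hi hr1] := I3 _ bp _ hu. have [_ hr2] := I3 _ bq _ hv.
apply: (hs p q (nth 0 (gins (wgraph t)) i) hpq); last by split.
by apply: mem_nth; rewrite s1.
Qed.

Theorem mainTheorem5 (a b : nat) (c d : term) :
  ty c = Some (a, b) -> ty d = Some (a, b) ->
  safe c -> safe d -> eq_modE c d -> eq_modA c d.
Proof.
move=> tc td sc sd E.
have [_ _ sm] := E_sound E.
have [dc _] := tyEval tc. have [dd _] := tyEval td.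
apply: (@JM b a c d tc td) => j hj.
rewrite (MAIN tc hj) (MAIN td hj).
apply: Crq.
have hc : forall i, occ i (nth Zero (eval c) j) -> i < a by move=> i /scoped_eval; rewrite dc.
have hd : forall i, occ i (nth Zero (eval d) j) -> i < a by move=> i /scoped_eval; rewrite dd.
rewrite (NF (safe_sep tc sc j) hc) (NF (safe_sep td sd j) hd).
rewrite (@D_ext a (bsem (nth Zero (eval c) j)) (bsem (nth Zero (eval d) j))) //.
reflexivity.
Qed.
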